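(* (Sector condition.) For every $\alpha>0$, $N\ge1$ and every pair of functions $F,H:E_N\to\mathbb R$, $$\langle\mathcal LF,H\rangle_{\mu_N}^2\le 4L^2\,D_N(F)\,D_N(H).$$
   Context: Fix an integer $L\ge2$ and let $\mathbb T_L=\mathbb Z/L\mathbb Z$. Fix $\alpha>0$; set $a(0)=1$, $a(n)=n^\alpha$ for $n\ge1$, $g(0)=0$ and $g(n)=a(n)/a(n-1)$ for $n\ge1$. $E_N=\{\eta\in\{0,1,2,\dots\}^{\mathbb T_L}:\sum_x\eta_x=N\}$; $\sigma^{x,y}\eta$ is obtained from $\eta$ by moving one particle from $x$ to $y$. Generator: $(\mathcal LF)(\eta)=\sum_{x\in\mathbb T_L}g(\eta_x)[F(\sigma^{x,x+1}\eta)-F(\eta)]$. Invariant measure $\mu_N(\eta)=W_N^{-1}\prod_xa(\eta_x)^{-1}$, $W_N=\sum_{\zeta\in E_N}\prod_xa(\zeta_x)^{-1}$; $\langle\cdot,\cdot\rangle_{\mu_N}$ is the $L^2(\mu_N)$ inner product; $D_N(F)=\frac12\sum_x\sum_{\eta\in E_N}\mu_N(\eta)g(\eta_x)[F(\sigma^{x,x+1}\eta)-F(\eta)]^2$. *)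

(* Defs.v *)
From Stdlib Require Import Reals.
From mathcomp Require Import all_boot.
Set Implicit Arguments. Unset Strict Implicit. Unset Printing Implicit Defensive.
Local Open Scope R_scope.

(* Configurations on the torus T_L = 'I_L (successor: ordS, i.e. x+1 mod L).
   A configuration with N particles has each eta_x <= N, so the state space
   E_N is identified with the configurations eta : {ffun 'I_L -> 'I_N.+1}
   with \sum_x eta_x = N. *)
Definition conf (L N : nat) := {ffun 'I_L -> 'I_N.+1}.

Definition inE_N (L N : nat) (eta : conf L N) : bool :=
  (\sum_(x < L) (nat_of_ord (eta x)) == N)%N.

Definition Rsum {I : Type} (s : seq I) (f : I -> R) : R :=
  foldr (fun i acc => Rplus (f i) acc) R0 s.
Definition Rprod {I : Type} (s : seq I) (f : I -> R) : R :=
  foldr (fun i acc => Rmult (f i) acc) R1 s.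

Definition E_N (L N : nat) : seq (conf L N) := enum (@inE_N L N).

Definition a_fn (alpha : R) (n : nat) : R :=
  match n with O => R1 | _ => Rpower (INR n) alpha end.
Definition g_fn (alpha : R) (n : nat) : R :=
  match n with O => R0 | S m => (a_fn alpha n / a_fn alpha m) end.

(* sigma^{x,y} eta : move one particle from x to y.  (When eta_x = 0 the
   result is irrelevant, since it is always multiplied by g(0) = 0.) *)
Definition sigma (L N : nat) (x y : 'I_L) (eta : conf L N) : conf L N :=
  [ffun z => if z == x then inord (eta x).-1
             else if z == y then inord (eta y).+1 else eta z].

Definition nxt (L : nat) (x : 'I_L) : 'I_L := ordS x.

Definition weight (alpha : R) (L N : nat) (eta : conf L N) : R :=
  Rprod (enum 'I_L) (fun x => / a_fn alpha (eta x)).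
Definition W_N (alpha : R) (L N : nat) : R :=
  Rsum (E_N L N) (@weight alpha L N).
Definition mu_N (alpha : R) (L N : nat) (eta : conf L N) : R :=
  (/ W_N alpha L N * weight alpha eta).

Definition gen (alpha : R) (L N : nat) (F : conf L N -> R) (eta : conf L N) : R :=
  Rsum (enum 'I_L) (fun x =>
    g_fn alpha (eta x) * (F (sigma x (nxt x) eta) - F eta)).

Definition inner (alpha : R) (L N : nat) (F H : conf L N -> R) : R :=
  Rsum (E_N L N) (fun eta => mu_N alpha eta * F eta * H eta).

Definition dirichlet (alpha : R) (L N : nat) (F : conf L N -> R) : R :=
  (/ 2 * Rsum (enum 'I_L) (fun x => Rsum (E_N L N) (fun eta =>
     mu_N alpha eta * g_fn alpha (eta x) *
     (F (sigma x (nxt x) eta) - F eta) ^ 2))).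

(* Main.v *)
Require Import Defs.
From Stdlib Require Import Reals.
From mathcomp Require Import all_boot.
From mathcomp Require Import all_order all_algebra Rstruct ring lra zify.
Set Implicit Arguments. Unset Strict Implicit. Unset Printing Implicit Defensive.
Import Order.TTheory GRing.Theory Num.Theory.

Section Gen.
Local Open Scope ring_scope.

Lemma RsumE (I : Type) (s : seq I) (f : I -> R) : Rsum s f = \sum_(i <- s) f i.
Proof. elim: s => [|i s IH] /=; first by rewrite big_nil. by rewrite big_cons IH. Qed.

Lemma RprodE (I : Type) (s : seq I) (f : I -> R) : Rprod s f = \prod_(i <- s) f i.
Proof. elim: s => [|i s IH] /=; first by rewrite big_nil. by rewrite big_cons IH. Qed.

Lemma wCS (I : finType) (P : pred I) (w a b : I -> R) :
  (forall i, P i -> 0 <= w i) ->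
  (\sum_(i | P i) w i * a i * b i) ^+ 2 <=
  (\sum_(i | P i) w i * a i ^+ 2) * (\sum_(i | P i) w i * b i ^+ 2).
Proof.
move=> w0.
have H : 0 <= \sum_(i | P i) \sum_(j | P j) w i * w j * (a i * b j - a j * b i) ^+ 2.
  apply: sumr_ge0 => i Pi; apply: sumr_ge0 => j Pj.
  by rewrite mulr_ge0 ?sqr_ge0 // mulr_ge0 // w0.
have E : \sum_(i | P i) \sum_(j | P j) w i * w j * (a i * b j - a j * b i) ^+ 2 =
   2 * ((\sum_(i | P i) w i * a i ^+ 2) * (\sum_(i | P i) w i * b i ^+ 2)) -
   2 * (\sum_(i | P i) w i * a i * b i) ^+ 2.
  transitivity (\sum_(i | P i) \sum_(j | P j)
     ((w i * a i ^+ 2) * (w j * b j ^+ 2) + (w j * a j ^+ 2) * (w i * b i ^+ 2)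
      - 2 * ((w i * a i * b i) * (w j * a j * b j)))).
    by apply: eq_bigr => i _; apply: eq_bigr => j _; ring.
  under eq_bigr do rewrite sumrB big_split /=.
  rewrite sumrB big_split /=.
  have -> : \sum_(i | P i) \sum_(j | P j) w i * a i ^+ 2 * (w j * b j ^+ 2) =
     (\sum_(i | P i) w i * a i ^+ 2) * (\sum_(i | P i) w i * b i ^+ 2).
    by rewrite big_distrlr.
  have -> : \sum_(i | P i) \sum_(j | P j) w j * a j ^+ 2 * (w i * b i ^+ 2) =
     (\sum_(i | P i) w i * a i ^+ 2) * (\sum_(i | P i) w i * b i ^+ 2).
    by rewrite exchange_big big_distrlr.
  have -> : \sum_(i | P i) \sum_(j | P j) 2 * (w i * a i * b i * (w j * a j * b j)) =
     2 * (\sum_(i | P i) w i * a i * b i) ^+ 2.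
    by rewrite expr2 big_distrlr mulr_sumr; apply: eq_bigr => i _; rewrite mulr_sumr.
  ring.
lra.
Qed.
End Gen.

Section Conf.
Variables (L N : nat).
Hypothesis hL : (1 < L)%N.
Local Notation C := (conf L N).
Local Notation sigma := Defs.sigma.

Lemma nxt_neq (x : 'I_L) : nxt x != x.
Proof.
apply/eqP => /(congr1 val) /=.
case: x => x xL /=.
case: (ltngtP x.+1 L) => [lt|gt|eq].
- by rewrite modn_small // => /eqP; rewrite eqn_leq ltnn.
- lia.
- rewrite eq modnn => x0; move: eq; rewrite -x0 => eq; by move: hL; rewrite -eq.
Qed.

Lemma pred_neq (x : 'I_L) : ord_pred x != x.
Proof.
apply/eqP => E. have := nxt_neq x. rewrite /nxt -{1}E ord_predK. by rewrite eqxx.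
Qed.

Lemma sum2 (xi : C) (a b : 'I_L) : a != b ->
  (nat_of_ord (xi a) + nat_of_ord (xi b) <= \sum_(x < L) nat_of_ord (xi x))%N.
Proof.
move=> ab; rewrite (bigD1 a) //= (bigD1 b) /=; last by rewrite eq_sym.
by rewrite addnA leq_addr.
Qed.

Lemma sum_ind (a : 'I_L) : (\sum_(x < L) (x == a : nat))%N = 1%N.
Proof.
rewrite (bigD1 a) //= eqxx big1 // => x /negPf ->. by [].
Qed.

Section Sig.
Variables (xi : C) (a b : 'I_L).
Hypotheses (hxi : inE_N xi) (ab : a != b) (pa : (0 < xi a)%N).

Lemma sigma_val z :
  (nat_of_ord (sigma a b xi z) + (nat_of_bool (z == a)) = nat_of_ord (xi z) + (nat_of_bool (z == b)))%N.
Proof.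
have hs := sum2 xi ab. move/eqP: hxi => hs'. rewrite hs' in hs.
rewrite /sigma ffunE.
case: (eqVneq z a) => [->|za].
- rewrite (negPf ab) inordK; last by rewrite ltnS (leq_trans (leq_pred _)) // -ltnS.
  by rewrite addn1 addn0 prednK.
- case: (eqVneq z b) => [->|zb]; last by [].
  rewrite inordK; first by rewrite addn0 addn1.
  rewrite ltnS. apply: leq_trans hs. lia.
Qed.

Lemma sigma_inE : inE_N (sigma a b xi).
Proof.
rewrite /inE_N; apply/eqP.
have: (\sum_(z < L) (nat_of_ord (sigma a b xi z) + (nat_of_bool (z == a))) =
       \sum_(z < L) (nat_of_ord (xi z) + (nat_of_bool (z == b))))%N.
  by apply: eq_bigr => z _; rewrite sigma_val.
rewrite !big_split /= !sum_ind (eqP hxi). by move/eqP; rewrite eqn_add2r => /eqP.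
Qed.

Lemma sigma_pos : (0 < sigma a b xi b)%N.
Proof.
have := sigma_val b. rewrite eqxx eq_sym (negPf ab) addn0 addn1 => ->. by [].
Qed.

End Sig.

Lemma sigma_inv (xi : C) (a b : 'I_L) : inE_N xi -> a != b -> (0 < xi a)%N ->
  sigma b a (sigma a b xi) = xi.
Proof.
move=> hxi ab pa.
apply/ffunP => z; apply/val_inj => /=.
have h1 := sigma_val hxi ab pa z.
have ba : b != a by rewrite eq_sym.
have h2 := sigma_val (sigma_inE hxi ab pa) ba (sigma_pos hxi ab pa) z.
lia.
Qed.
End Conf.

Section Weights.
Variables (L N : nat) (alpha : R).
Hypothesis hL : (1 < L)%N.
Local Notation C := (conf L N).
Local Notation sigma := Defs.sigma.
Local Open Scope ring_scope.

Lemma a_pos n : 0 < a_fn alpha n.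
Proof. case: n => [|n] /=; apply/RltP; [exact: Rlt_0_1 | exact: exp_pos]. Qed.

Lemma a_neq0 n : a_fn alpha n != 0.
Proof. by rewrite gt_eqF // a_pos. Qed.

Lemma g_ge0 n : 0 <= g_fn alpha n.
Proof. case: n => [|n]; first by rewrite /= lexx. rewrite /g_fn; apply: divr_ge0; apply: ltW; apply: a_pos. Qed.

Lemma weightE (xi : C) : weight alpha xi = \prod_(x < L) (a_fn alpha (xi x))^-1.
Proof. by rewrite /weight RprodE big_enum. Qed.

Lemma weight_pos (xi : C) : 0 < weight alpha xi.
Proof. rewrite weightE; apply: prodr_gt0 => x _; by rewrite invr_gt0 a_pos. Qed.

Lemma prod2 (f : 'I_L -> R) (a b : 'I_L) : a != b ->
  \prod_(x < L) f x = f a * (f b * \prod_(x < L | (x != a) && (x != b)) f x).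
Proof.
move=> ab; rewrite (bigD1 a) //= (bigD1 b) /=; last by rewrite eq_sym.
by [].
Qed.

Lemma weight_sigma (xi : C) (a b : 'I_L) : inE_N xi -> a != b -> (0 < xi a)%N ->
  weight alpha (sigma a b xi) * g_fn alpha (sigma a b xi b) =
  weight alpha xi * g_fn alpha (xi a).
Proof.
move=> hxi ab pa.
have hv := sigma_val hL hxi ab pa.
have va : nat_of_ord (sigma a b xi a) = (xi a).-1.
  have := hv a; rewrite eqxx (negPf ab); lia.
have vb : nat_of_ord (sigma a b xi b) = (xi b).+1.
  have := hv b; rewrite eqxx eq_sym (negPf ab); lia.
have ba : b != a by rewrite eq_sym.
rewrite !weightE !(prod2 _ ab).
have -> : \prod_(i < L | (i != a) && (i != b)) (a_fn alpha (sigma a b xi i))^-1 =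
          \prod_(i < L | (i != a) && (i != b)) (a_fn alpha (xi i))^-1.
  apply: eq_bigr => i /andP [ia ib]. have := hv i. rewrite (negPf ia) (negPf ib) !addn0.
  by move=> ->.
rewrite va vb.
have gS n : g_fn alpha n.+1 = a_fn alpha n.+1 / a_fn alpha n by [].
rewrite -{2 3}(prednK pa) !gS.
have h1 := a_neq0 (xi a).-1; have h2 := a_neq0 (xi a).-1.+1.
have h3 := a_neq0 (xi b); have h4 := a_neq0 (xi b).+1.
move: h1 h2 h3 h4.
set A1 := a_fn alpha (xi a).-1; set A2 := a_fn alpha (xi a).-1.+1.
set A3 := a_fn alpha (xi b); set A4 := a_fn alpha (xi b).+1.
move=> h1 h2 h3 h4.
field. by rewrite h1 h2 h3 h4.
Qed.
End Weights.

Section Main.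
Variables (L N : nat) (alpha : R).
Hypothesis hL : (1 < L)%N.
Local Notation C := (conf L N).
Local Notation sigma := Defs.sigma.
Local Open Scope ring_scope.

Definition T (s : C * 'I_L) : C * 'I_L := (sigma s.2 (nxt s.2) s.1, nxt s.2).
Definition Tinv (s : C * 'I_L) : C * 'I_L := (sigma s.2 (ord_pred s.2) s.1, ord_pred s.2).
Definition P : pred (C * 'I_L) := fun s => inE_N s.1 && (0 < s.1 s.2)%N.
Definition w (s : C * 'I_L) : R := mu_N alpha s.1 * g_fn alpha (s.1 s.2).
Definition Sum (f : C * 'I_L -> R) := \sum_(s | P s) w s * f s.

Lemma P_T s : P s -> P (T s).
Proof.
case: s => xi x /andP [h1 h2] /=.
have ne : x != nxt x by rewrite eq_sym nxt_neq.
by rewrite /P /= (sigma_inE hL h1 ne h2) (sigma_pos hL h1 ne h2).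
Qed.

Lemma TinvK s : P s -> Tinv (T s) = s.
Proof.
case: s => xi x /andP [h1 h2] /=.
have ne : x != nxt x by rewrite eq_sym nxt_neq.
have e : ord_pred (nxt x) = x by exact: ordSK.
rewrite /Tinv /T /= e (sigma_inv hL h1 ne h2) //.
Qed.

Lemma P_Tinv s : P s -> P (Tinv s) /\ T (Tinv s) = s.
Proof.
case: s => xi x /andP [h1 h2] /=.
have ne : x != ord_pred x by rewrite eq_sym pred_neq.
split.
  by rewrite /P /= (sigma_inE hL h1 ne h2) (sigma_pos hL h1 ne h2).
have e : nxt (ord_pred x) = x by exact: ord_predK.
by rewrite /T /Tinv /= e (sigma_inv hL h1 ne h2).
Qed.

Lemma w_ge0 s : 0 <= w s.
Proof.
rewrite /w /mu_N; apply: mulr_ge0; last exact: g_ge0.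
apply: mulr_ge0; last by apply: ltW; apply: weight_pos.
rewrite invr_ge0 /W_N RsumE; apply: sumr_ge0 => i _; apply: ltW; apply: weight_pos.
Qed.

Lemma w_T s : P s -> w (T s) = w s.
Proof.
case: s => xi x /andP [h1 h2].
have ne : x != nxt x by rewrite eq_sym nxt_neq.
rewrite /w /T /mu_N /= !Rmult_assoc; congr Rmult; exact: (weight_sigma alpha hL h1 ne h2).
Qed.

Lemma Sum_T f : Sum (fun s => f (T s)) = Sum f.
Proof.
symmetry; rewrite /Sum (reindex_onto T Tinv); last by move=> s /P_Tinv [].
apply: eq_big => s.
  apply/idP/idP.
    by case/andP => h /eqP e; rewrite -e; case: (P_Tinv h).
  by move=> h; rewrite P_T // TinvK // eqxx.
case/andP => h /eqP e; have Ps : P s by rewrite -e; case: (P_Tinv h).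
by rewrite w_T.
Qed.

Lemma Sum_iter f k : Sum (fun s => f (iter k T s)) = Sum f.
Proof.
elim: k f => [|k IH] f; first by [].
rewrite -(IH f) -(Sum_T (fun s => f (iter k T s))).
by apply: eq_bigr => s _; rewrite iterSr.
Qed.

Lemma P_iter s k : P s -> P (iter k T s).
Proof. move=> Ps; elim: k => [|k IH] //=; exact: P_T. Qed.

Lemma iter_nxt (x : 'I_L) k : nat_of_ord (iter k (@nxt L) x) = ((x + k) %% L)%N.
Proof.
elim: k => [|k IH] /=; first by rewrite addn0 modn_small.
rewrite IH /= -addn1 modnDml -addnA addn1 //.
Qed.

Lemma iter_T_inv s k : P s ->
  (iter k T s).2 = iter k (@nxt L) s.2 /\
  forall z, (nat_of_ord ((iter k T s).1 z) + (z == s.2) =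
             nat_of_ord (s.1 z) + (z == (iter k T s).2))%N.
Proof.
move=> Ps; elim: k => [|k [IH1 IH2]] /=; first by split.
split; first by rewrite IH1.
have Pk := P_iter k Ps.
case/andP: Pk => h1 h2.
have ne : (iter k T s).2 != nxt (iter k T s).2 by rewrite eq_sym nxt_neq.
move=> z. have := sigma_val hL h1 ne h2 z. have := IH2 z. lia.
Qed.

Lemma iter_L s : P s -> iter L T s = s.
Proof.
move=> Ps; have [h1 h2] := iter_T_inv L Ps.
have e2 : (iter L T s).2 = s.2.
  apply/val_inj; rewrite h1 /= iter_nxt modnDr modn_small //.
case: s Ps h1 h2 e2 => xi x Ps h1 h2 e2.
move: (iter L T (xi, x)) h2 e2 => [zeta y] /= h2 ey.
rewrite ey; congr pair; apply/ffunP => z; apply/val_inj; have := h2 z; rewrite ey; by move/eqP; rewrite eqn_add2r => /eqP.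
Qed.
End Main.

Section Final.
Variables (L N : nat) (alpha : R).
Hypothesis hL : (1 < L)%N.
Local Notation C := (conf L N).
Local Notation sigma := Defs.sigma.
Local Notation T := (@T L N).
Local Notation P := (@P L N).
Local Notation Sum := (@Sum L N alpha).
Local Notation w := (@w L N alpha).
Local Open Scope ring_scope.

Definition dd (F : C -> R) (s : C * 'I_L) := F (T s).1 - F s.1.

Lemma sum_to_Sum (f : C * 'I_L -> R) :
  \sum_(eta <- E_N L N) \sum_(x < L) mu_N alpha eta * g_fn alpha (eta x) * f (eta, x)
  = Sum f.
Proof.
rewrite /E_N big_enum /= pair_big /Sum /= [LHS]big_mkcond [RHS]big_mkcond /=.
apply: eq_bigr => [[eta x]] _ /=.
rewrite /P /= unfold_in.
rewrite andbT -/(inE_N eta).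
case: (inE_N eta); last by [].
case: (posnP (eta x)) => [e|p]; last by [].
by rewrite e /g_fn mulr0 mul0r.
Qed.

Lemma innerE (F H : C -> R) :
  inner alpha (gen alpha F) H = Sum (fun s => dd F s * H s.1).
Proof.
rewrite /inner RsumE -sum_to_Sum; apply: eq_bigr => eta _.
rewrite /gen RsumE big_enum /= !RealsE mulr_sumr mulr_suml; apply: eq_bigr => x _.
by rewrite /dd /T /= !mulrA.
Qed.

Lemma dirE (F : C -> R) :
  dirichlet alpha F = 2^-1 * Sum (fun s => dd F s ^+ 2).
Proof.
rewrite /dirichlet RsumE -sum_to_Sum RealsE; congr (_ * _).
rewrite big_enum /=.
under eq_bigr do rewrite RsumE.
rewrite exchange_big /=.
apply: eq_bigr => eta _; apply: eq_bigr => x _.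
by rewrite !RealsE /dd /= expr2 mulr1.
Qed.

Lemma tele (G : C -> R) s k :
  \sum_(j < k) dd G (iter j T s) = G (iter k T s).1 - G s.1.
Proof.
rewrite -(big_mkord xpredT (fun j => dd G (iter j T s))).
exact: (telescope_sumr (fun j => G (iter j T s).1) (leq0n k)).
Qed.

Definition AA (G : C -> R) s := \sum_(k < L) `|dd G (iter k T s)|.

Lemma AA_ge0 G s : 0 <= AA G s.
Proof. by apply: sumr_ge0 => k _; rewrite normr_ge0. Qed.

Lemma Qbound (F H : C -> R) s : P s ->
  `|\sum_(k < L) dd F (iter k T s) * H (iter k T s).1| <= AA F s * AA H s.
Proof.
move=> Ps.
have e0 : \sum_(k < L) dd F (iter k T s) = 0 by rewrite tele (iter_L hL Ps) subrr.
have -> : \sum_(k < L) dd F (iter k T s) * H (iter k T s).1 =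
          \sum_(k < L) dd F (iter k T s) * (H (iter k T s).1 - H s.1).
  transitivity (\sum_(k < L) dd F (iter k T s) * H (iter k T s).1 -
                (\sum_(k < L) dd F (iter k T s)) * H s.1); first by rewrite e0 mul0r subr0.
  by rewrite mulr_suml -sumrB; apply: eq_bigr => k _; rewrite mulrBr.
rewrite /AA mulr_suml.
apply: le_trans (ler_norm_sum _ _ _) _.
apply: ler_sum => k _.
rewrite normrM; apply: ler_wpM2l; first exact: normr_ge0.
rewrite -tele.
apply: le_trans (ler_norm_sum _ _ _) _.
rewrite -!(big_mkord xpredT (fun j => `|dd H (iter j T s)|)).
rewrite [X in _ <= X](big_cat_nat (n := k)) //=; last exact: ltnW (ltn_ord k).
rewrite lerDl; apply: sumr_ge0 => j _; exact: normr_ge0.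
Qed.

Lemma LI (F H : C -> R) :
  L%:R * Sum (fun s => dd F s * H s.1) =
  Sum (fun s => \sum_(k < L) dd F (iter k T s) * H (iter k T s).1).
Proof.
transitivity (\sum_(k < L) Sum (fun s => dd F (iter k T s) * H (iter k T s).1)).
  rewrite (eq_bigr (fun _ => Sum (fun s => dd F s * H s.1))); last first.
    by move=> k _; rewrite (Sum_iter alpha hL (fun s => dd F s * H s.1) k).
  by rewrite sumr_const card_ord mulr_natl.
rewrite /Sum exchange_big /=; apply: eq_bigr => s _; by rewrite mulr_sumr.
Qed.

Lemma SumAB (F H : C -> R) :
  `|L%:R * Sum (fun s => dd F s * H s.1)| <= Sum (fun s => AA F s * AA H s).
Proof.
rewrite LI /Sum; apply: le_trans (ler_norm_sum _ _ _) _; apply: ler_sum => s Ps.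
rewrite normrM ger0_norm ?w_ge0 //; apply: ler_wpM2l; [exact: w_ge0 | exact: Qbound].
Qed.

Lemma AA2 (G : C -> R) s :
  AA G s ^+ 2 <= L%:R * \sum_(k < L) dd G (iter k T s) ^+ 2.
Proof.
have h := @wCS _ xpredT (fun _ : 'I_L => 1) (fun k => `|dd G (iter k T s)|) (fun _ => 1)
   (fun _ _ => @ler01 R).
have e1 : \sum_(k : 'I_L | xpredT k) 1 * `|dd G (iter k T s)| * 1 = AA G s.
  by apply: eq_bigr => k _; rewrite mul1r mulr1.
have e2 : \sum_(k : 'I_L | xpredT k) 1 * `|dd G (iter k T s)| ^+ 2 =
          \sum_(k < L) dd G (iter k T s) ^+ 2.
  by apply: eq_bigr => k _; rewrite mul1r real_normK // num_real.
have e3 : \sum_(k : 'I_L | xpredT k) (1 : R) * 1 ^+ 2 = L%:R.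
  by rewrite (eq_bigr (fun _ => 1)) ?sumr_const ?card_ord // => k _; rewrite expr1n mulr1.
rewrite e1 e2 e3 in h; by rewrite mulrC.
Qed.

Lemma SumA2 (G : C -> R) :
  Sum (fun s => AA G s ^+ 2) <= L%:R ^+ 2 * Sum (fun s => dd G s ^+ 2).
Proof.
apply: (@le_trans _ _ (Sum (fun s => L%:R * \sum_(k < L) dd G (iter k T s) ^+ 2))).
  by apply: ler_sum => s _; apply: ler_wpM2l; [exact: w_ge0 | exact: AA2].
rewrite le_eqVlt; apply/orP; left; apply/eqP.
have -> : Sum (fun s => L%:R * \sum_(k < L) dd G (iter k T s) ^+ 2) =
   L%:R * \sum_(k < L) Sum (fun s => dd G (iter k T s) ^+ 2).
  rewrite /Sum exchange_big mulr_sumr /=; apply: eq_bigr => s _.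
  by rewrite mulrCA mulr_sumr.
rewrite (eq_bigr (fun _ => Sum (fun s => dd G s ^+ 2))); last first.
  by move=> k _; rewrite (Sum_iter alpha hL (fun s => dd G s ^+ 2) k).
by rewrite sumr_const card_ord; ring.
Qed.

Lemma main_ineq (F H : C -> R) :
  Sum (fun s => dd F s * H s.1) ^+ 2 <=
  L%:R ^+ 2 * Sum (fun s => dd F s ^+ 2) * Sum (fun s => dd H s ^+ 2).
Proof.
set I := Sum (fun s => dd F s * H s.1).
set SF := Sum (fun s => dd F s ^+ 2).
set SH := Sum (fun s => dd H s ^+ 2).
have h1 := SumAB F H.
have h2 := @wCS _ P w (AA F) (AA H) (fun s _ => @w_ge0 L N alpha s).
have e : \sum_(s | P s) w s * AA F s * AA H s = Sum (fun s => AA F s * AA H s).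
  by apply: eq_bigr => s _; rewrite mulrA.
rewrite e in h2.
have h3 := SumA2 F. have h4 := SumA2 H.
have g3 : 0 <= Sum (fun s => AA F s ^+ 2).
  by apply: sumr_ge0 => s _; rewrite mulr_ge0 ?w_ge0 ?sqr_ge0.
have g4 : 0 <= Sum (fun s => AA H s ^+ 2).
  by apply: sumr_ge0 => s _; rewrite mulr_ge0 ?w_ge0 ?sqr_ge0.
have h5 := ler_pM g3 g4 h3 h4.
have hx : (L%:R * I) ^+ 2 <= Sum (fun s => AA F s * AA H s) ^+ 2.
  rewrite -[X in X <= _]real_normK ?num_real // !expr2; by apply: ler_pM => //; exact: normr_ge0.
have hL0 : 0 < (L%:R : R) ^+ 2 by rewrite exprn_gt0 // ltr0n ltnW.
have : L%:R ^+ 2 * I ^+ 2 <= L%:R ^+ 2 * (L%:R ^+ 2 * SF * SH).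
  rewrite -exprMn; apply: le_trans hx _; apply: le_trans h2 _; apply: le_trans h5 _.
  rewrite le_eqVlt; apply/orP; left; apply/eqP; rewrite /SF /SH; ring.
by move=> h; rewrite (ler_pM2l hL0) in h.
Qed.
End Final.

Section Fin.
Local Open Scope ring_scope.
Lemma final_ring (I SF SH Lr : R) : I ^+ 2 <= Lr ^+ 2 * SF * SH ->
  I ^+ 2 <= 4%:R * Lr ^+ 2 * (2^-1 * SF) * (2^-1 * SH).
Proof.
move=> h; apply: le_trans h _; rewrite le_eqVlt; apply/orP; left; apply/eqP.
by field.
Qed.
End Fin.

Local Open Scope R_scope.
Lemma four : 4 = @GRing.natmul R (GRing.one R) 4.
Proof. by rewrite RealsE INRE. Qed.
Theorem lemma3p1 (L : nat) (hL : (2 <= L)%N) (alpha : R) (halpha : (0 < alpha))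
  (N : nat) (hN : (1 <= N)%N) (F H : conf L N -> R) :
  inner alpha (gen alpha F) H ^ 2
     <= 4 * INR L ^ 2 * dirichlet alpha F * dirichlet alpha H.
Proof.
have hL' : (1 < L)%N by [].
rewrite innerE !dirE.
apply/RleP.
rewrite !RpowE INRE four.
apply: final_ring.
exact: (main_ineq alpha hL' F H).
Qed.
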